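(* Let $\mathcal K$ (UAVs) and $\mathcal I$ (subscribers) be finite sets. Fix $H>0$, $\sigma^2>0$, $\omega_{ij}>0$, transmit powers $p_j\ge 0$, subscriber positions $s_i\in\mathbb R^2$, previous UAV positions $\bar q_k\in\mathbb R^2$, association indicators $c_{ik}\in\{0,1\}$ with $\sum_kc_{ik}\le1$, $\sum_ic_{ik}\le 1$, constants $L>0$, $B>0$, $V\rho_1\ge0$, nonnegative weights $a_i$, and positive constants $R_{\rm cov}$, $d_{\min}$, $s_{\max}$. For UAV positions $q=(q_k)_{k\in\mathcal K}$, $q_k\in\mathbb R^2$, let $h_{ij}(q)=\omega_{ij}/(H^2+\|q_j-s_i\|^2)$ and $r_i(q)=\sum_kc_{ik}\log_2\big(1+\frac{p_kh_{ik}(q)}{\sigma^2+\sum_{j\ne k}p_jh_{ij}(q)}\big)$. Problem (T): maximize $\Psi(q)=\sum_ia_ir_i(q)-V\rho_1\sum_i\frac{L}{B\,r_i(q)}$ (with $L/(B\cdot0)=+\infty$) subject to $\|q_k-s_i\|\le R_{\rm cov}$ for all $i,k$; $\|q_k-q_j\|^2\ge d_{\min}^2$ for all $k\ne j$; $\|q_k-\bar q_k\|^2\le s_{\max}^2$ for all $k$. Let $\mathrm{OPT}_T$ be the supremum of $\Psi$ over this feasible set. Fix a local point $q^{(r)}$ and define $d^{(r)}_{ij}=H^2+\|q^{(r)}_j-s_i\|^2$, $D^{(r)}_i=\log_2(\sigma^2+\sum_jp_j\omega_{ij}/d^{(r)}_{ij})$, $E^{(r)}_{ij}=p_j\omega_{ij}/\big((d^{(r)}_{ij})^2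 2^{D^{(r)}_i}\ln2\big)$, $\tilde\Lambda_{ik}(b)=-\log_2(\sigma^2+\sum_{j\ne k}p_j\omega_{ij}/(H^2+b_{ij}))$. Problem (C): maximize $\sum_ia_i\eta_i-V\rho_1\sum_i\xi_i$ over $q$, $\eta=(\eta_i)$, $\xi=(\xi_i)$, $b=(b_{ij})$ with $b_{ij}>-H^2$, subject to: $\xi_i\ge0$, $\eta_i\ge0$, $\xi_i\eta_i\ge L/B$ for all $i$; for all $i$, $\sum_kc_{ik}\big(D^{(r)}_i-\sum_jE^{(r)}_{ij}(\|q_j-s_i\|^2-\|q^{(r)}_j-s_i\|^2)\big)+\sum_kc_{ik}\tilde\Lambda_{ik}(b)\ge\eta_i$; for all $i,j$: $-\|q^{(r)}_j-s_i\|^2+2(q^{(r)}_j-s_i)^{\rm T}(q_j-s_i)\ge b_{ij}$; for all $k\ne j$: $-\|q^{(r)}_k-q^{(r)}_j\|^2+2(q^{(r)}_k-q^{(r)}_j)^{\rm T}(q_k-q_j)\ge d_{\min}^2$; $\|q_k-s_i\|\le R_{\rm cov}$ for all $i,k$; $\|q_k-\bar q_k\|\le s_{\max}$ for all $k$. Let $\mathrm{OPT}_C$ be the supremum of the objective of (C) ($-\infty$ if infeasible). Then $\mathrm{OPT}_C\le\mathrm{OPT}_T$, i.e., the optimal value of (C) is a lower bound on the optimal value of (T).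
   Context: Problem (T) is the per-slot UAV trajectory subproblem of a Lyapunov drift-plus-penalty scheme for multi-UAV video delivery, with fixed association and fixed powers: UAVs fly at common altitude $H$, $q_k$ is UAV $k$'s horizontal position in the current slot and $\bar q_k$ in the previous slot, $R_{\rm cov}$ is the line-of-sight coverage radius (written $H\tan^{-1}\theta$ in the paper), $d_{\min}$ the minimum inter-UAV safety distance, $s_{\max}$ the maximum per-slot flight distance. In the paper $a_i=[X_i(t)]^++[Z_i(t)]^+$ (virtual queue backlogs, $[x]^+=\max\{x,0\}$), $L$ is video data length per slot and $B$ the bandwidth. *)

(* Defs.v *)
From HB Require Import structures.
From mathcomp Require Import all_boot all_order all_algebra.
From mathcomp Require Import boolp classical_sets reals constructive_ereal ereal exp.
Set Implicit Arguments. Unset Strict Implicit. Unset Printing Implicit Defensive.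
Import Order.TTheory GRing.Theory Num.Theory.
Local Open Scope ring_scope.
Local Open Scope classical_set_scope.

Definition pt (R : realType) := (R * R)%type.
Definition dotp (R : realType) (x y : pt R) : R := x.1 * y.1 + x.2 * y.2.
Definition subp (R : realType) (x y : pt R) : pt R := (x.1 - y.1, x.2 - y.2).
Definition sqdist (R : realType) (x y : pt R) : R := dotp (subp x y) (subp x y).
Definition dist (R : realType) (x y : pt R) : R := Num.sqrt (sqdist x y).

Definition log2 (R : realType) (x : R) : R := ln x / ln 2.

Record params (R : realType) (K I : finType) := Params {
  Halt   : R;
  sigma2 : R;
  omega  : I -> K -> R;
  pw     : K -> R;
  spos   : I -> pt R;
  qbar   : K -> pt R;
  assoc  : I -> K -> R;
  Lvid   : R;
  Bw     : R;
  Vrho   : R;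
  wgt    : I -> R;
  Rcov   : R;
  dmin   : R;
  smax   : R }.


Definition hgain R K I (P : params R K I) (q : K -> pt R) (i : I) (j : K) : R :=
  omega P i j / (Halt P ^+ 2 + sqdist (q j) (spos P i)).

Definition rate R K I (P : params R K I) (q : K -> pt R) (i : I) : R :=
  \sum_(k : K) assoc P i k *
     log2 (1 + pw P k * hgain P q i k /
               (sigma2 P + \sum_(j : K | j != k) pw P j * hgain P q i j)).

Definition delay_pen R K I (P : params R K I) (q : K -> pt R) (i : I) : \bar R :=
  if rate P q i == 0 then +oo%E else (Lvid P / (Bw P * rate P q i))%:E.

Definition PsiT R K I (P : params R K I) (q : K -> pt R) : \bar R :=
  ((\sum_(i : I) wgt P i * rate P q i)%:E
   - (Vrho P)%:E * (\sum_(i : I) delay_pen P q i))%E.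

Definition feasT R K I (P : params R K I) : set (K -> pt R) :=
  [set q | (forall i k, dist (q k) (spos P i) <= Rcov P) /\
           (forall k j, k != j -> sqdist (q k) (q j) >= dmin P ^+ 2) /\
           (forall k, sqdist (q k) (qbar P k) <= smax P ^+ 2)].

Definition OPT_T R K I (P : params R K I) : \bar R :=
  ereal_sup [set PsiT P q | q in feasT P].

Definition dr R K I (P : params R K I) (qr : K -> pt R) (i : I) (j : K) : R :=
  Halt P ^+ 2 + sqdist (qr j) (spos P i).

Definition Dr R K I (P : params R K I) (qr : K -> pt R) (i : I) : R :=
  log2 (sigma2 P + \sum_(j : K) pw P j * omega P i j / dr P qr i j).

Definition Er R K I (P : params R K I) (qr : K -> pt R) (i : I) (j : K) : R :=
  pw P j * omega P i j /
    ((dr P qr i j) ^+ 2 * powR 2 (Dr P qr i) * ln 2).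

Definition Lamt R K I (P : params R K I) (b : I -> K -> R) (i : I) (k : K) : R :=
  - log2 (sigma2 P + \sum_(j : K | j != k) pw P j * omega P i j / (Halt P ^+ 2 + b i j)).

Definition varC R (K I : finType) :=
  ((K -> pt R) * (I -> R) * (I -> R) * (I -> K -> R))%type.

Definition objC R K I (P : params R K I) (x : varC R K I) : R :=
  let: (q, eta, xi, b) := x in
  \sum_(i : I) wgt P i * eta i - Vrho P * \sum_(i : I) xi i.

Definition feasC R K I (P : params R K I) (qr : K -> pt R) : set (varC R K I) :=
  [set x | let: (q, eta, xi, b) := x in
    (forall i j, b i j > - Halt P ^+ 2) /\
    (forall i, 0 <= xi i /\ 0 <= eta i /\ xi i * eta i >= Lvid P / Bw P) /\
    (forall i,
       \sum_(k : K) assoc P i k *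
          (Dr P qr i - \sum_(j : K) Er P qr i j *
              (sqdist (q j) (spos P i) - sqdist (qr j) (spos P i)))
       + \sum_(k : K) assoc P i k * Lamt P b i k >= eta i) /\
    (forall i j,
       - sqdist (qr j) (spos P i)
       + 2 * dotp (subp (qr j) (spos P i)) (subp (q j) (spos P i)) >= b i j) /\
    (forall k j, k != j ->
       - sqdist (qr k) (qr j)
       + 2 * dotp (subp (qr k) (qr j)) (subp (q k) (q j)) >= dmin P ^+ 2) /\
    (forall i k, dist (q k) (spos P i) <= Rcov P) /\
    (forall k, dist (q k) (qbar P k) <= smax P)].

Definition OPT_C R K I (P : params R K I) (qr : K -> pt R) : \bar R :=
  ereal_sup [set (objC P x)%:E | x in feasC P qr].

(* Main.v *)
Require Import Defs.
From HB Require Import structures.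
From mathcomp Require Import all_boot all_order all_algebra.
From mathcomp Require Import boolp classical_sets reals constructive_ereal ereal exp.
From mathcomp Require Import ring lra.
Import Order.TTheory GRing.Theory Num.Theory.
Local Open Scope ring_scope.

Section Helpers.
Context {R : realType}.

Lemma ln_le_sub1 {x : R} : 0 < x -> ln x <= x - 1.
Proof.
move=> x0; have := @le_ln1Dx R (x - 1).
rewrite [1 + _]addrC subrK; apply; lra.
Qed.

Lemma geo (a c : pt R) : - dotp a a + 2 * dotp a c <= dotp c c.
Proof.
rewrite /dotp; have := sqr_ge0 (c.1 - a.1); have := sqr_ge0 (c.2 - a.2); nra.
Qed.

Lemma dotp_ge0 (a : pt R) : 0 <= dotp a a.
Proof. rewrite /dotp; have := sqr_ge0 a.1; have := sqr_ge0 a.2; nra. Qed.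

Lemma sqdist_ge0 (x y : pt R) : 0 <= sqdist x y.
Proof. exact: dotp_ge0. Qed.

Lemma ln2_gt0 : 0 < ln (2 : R).
Proof. apply: ln_gt0; lra. Qed.

Lemma powR_log (y : R) : 0 < y -> powR 2 (ln y / ln 2) = y.
Proof.
move=> y0; rewrite /powR ifF; last by rewrite pnatr_eq0.
rewrite divfK ?lnK //; last by rewrite gt_eqF // ln2_gt0.
Qed.

Lemma lin_bound (K : finType) (s : R) (al d d0 : K -> R) :
  0 < s -> (forall j, 0 <= al j) -> (forall j, 0 < d j) -> (forall j, 0 < d0 j) ->
  ln (s + \sum_j al j / d0 j)
  - \sum_j (al j / (d0 j ^+ 2) / (s + \sum_j al j / d0 j) * (d j - d0 j))
  <= ln (s + \sum_j al j / d j).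
Proof.
move=> s0 al0 dp d0p.
set Sa := \sum_j al j / d0 j; set Sb := \sum_j al j / d j.
have Sa0 : 0 <= Sa by apply: sumr_ge0 => j _; apply: divr_ge0 => //; apply: ltW.
have Sb0 : 0 <= Sb by apply: sumr_ge0 => j _; apply: divr_ge0 => //; apply: ltW.
have Y0p : 0 < s + Sa by lra.
have Yp : 0 < s + Sb by lra.
set M := (s + Sb) / (s + Sa).
have Mp : 0 < M by apply: divr_gt0.
have lnM : ln M = ln (s + Sb) - ln (s + Sa) by rewrite /M ln_div // posrE.
have Hj : forall j, al j / d0 j * (1 - d j / d0 j) <=
    al j / d j * M^-1 - al j / d0 j + al j / d0 j * ln M.
  move=> j.
  have -> : al j / d j * M^-1 - al j / d0 j + al j / d0 j * ln M =
            al j / d0 j * (d0 j / d j / M - 1 + ln M).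
    by field; rewrite !gt_eqF ?dp ?d0p.
  apply: ler_wpM2l; first by apply: divr_ge0 => //; apply: ltW.
  have h1 := ln_le_sub1 (divr_gt0 (dp j) (d0p j)).
  have q0 : 0 < d0 j / d j / M by apply: divr_gt0 => //; apply: divr_gt0.
  have h2 := ln_le_sub1 q0.
  rewrite ln_div ?posrE // in h1.
  rewrite !ln_div ?posrE // in h2; last by apply: divr_gt0.
  lra.
have HS : \sum_j (al j / d0 j * (1 - d j / d0 j)) <=
    \sum_j (al j / d j * M^-1 - al j / d0 j + al j / d0 j * ln M).
  by apply: ler_sum => j _; exact: Hj.
rewrite big_split /= sumrB /= -!mulr_suml -/Sa -/Sb in HS.
have HM : 1 - M^-1 <= ln M.
  have hM : 0 < M^-1 by rewrite invr_gt0.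
  have := ln_le_sub1 hM; rewrite lnV ?posrE //; lra.
have Sbe : Sb * M^-1 = (s + Sa) - s * M^-1.
  by rewrite /M invf_div; field; rewrite !gt_eqF.
set F := \sum_j _ in HS.
have key : F <= (s + Sa) * ln M.
  apply: (le_trans HS); rewrite Sbe.
  have : s * (1 - M^-1) <= s * ln M by apply: ler_wpM2l => //; apply: ltW.
  lra.
have key2 : F / (s + Sa) <= ln M by rewrite ler_pdivrMr // mulrC.
have -> : \sum_j (al j / (d0 j ^+ 2) / (s + Sa) * (d j - d0 j)) = - F / (s + Sa).
  rewrite mulNr mulr_suml -sumrN; apply: eq_bigr => j _.
  by field; rewrite !gt_eqF ?d0p.
lra.
Qed.

End Helpers.

Theorem lemma2 (R : realType) (K I : finType) (P : params R K I) (qr : K -> pt R) :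
  0 < Halt P -> 0 < sigma2 P ->
  (forall i j, 0 < omega P i j) ->
  (forall j, 0 <= pw P j) ->
  (forall i k, assoc P i k = 0 \/ assoc P i k = 1) ->
  (forall i, \sum_(k : K) assoc P i k <= 1) ->
  (forall k, \sum_(i : I) assoc P i k <= 1) ->
  0 < Lvid P -> 0 < Bw P -> 0 <= Vrho P ->
  (forall i, 0 <= wgt P i) ->
  0 < Rcov P -> 0 < dmin P -> 0 < smax P ->
  (OPT_C P qr <= OPT_T P)%E.
Proof.
move=> H0 s0 om0 pw0 c01 _ _ L0 B0 V0 a0 _ _ sm0.
rewrite /OPT_C /OPT_T; apply: ge_ereal_sup => _ [[[[q eta] xi] b] Hx <-].
move: Hx => /= [Hb [Hxe [Hrate [Hbq [Hd [Hcov Hs]]]]]].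
apply: (@le_trans _ _ (PsiT P q)); last first.
  apply: ereal_sup_ubound; exists q => //.
  split; first exact: Hcov.
  split.
    move=> k j kj; apply: (le_trans (Hd k j kj)); exact: geo.
  move=> k; have := Hs k; rewrite /dist => h.
  have h0 := sqrtr_ge0 (sqdist (q k) (qbar P k)).
  have := sqr_sqrtr (dotp_ge0 (subp (q k) (qbar P k))).
  rewrite /sqdist in h h0 *; nra.
have ln2p : 0 < ln (2 : R) := ln2_gt0.
have H2 : 0 < Halt P ^+ 2 by rewrite exprn_gt0.
have Hr : forall i, eta i <= rate P q i.
  move=> i.
  have al0 : forall j, 0 <= pw P j * omega P i j.
    by move=> j; apply: mulr_ge0 => //; apply: ltW.
  have dp : forall j, 0 < Halt P ^+ 2 + sqdist (q j) (spos P i).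
    by move=> j; have := sqdist_ge0 (q j) (spos P i); lra.
  have d0p : forall j, 0 < dr P qr i j.
    by move=> j; rewrite /dr; have := sqdist_ge0 (qr j) (spos P i); lra.
  have bp : forall j, 0 < Halt P ^+ 2 + b i j by move=> j; have := Hb i j; lra.
  have conv : forall j, pw P j * omega P i j / (Halt P ^+ 2 + sqdist (q j) (spos P i))
      = pw P j * hgain P q i j by move=> j; rewrite /hgain mulrA.
  have hg0 : forall j, 0 <= pw P j * hgain P q i j.
    by move=> j; rewrite -conv; apply: divr_ge0 => //; apply: ltW.
  set Y := sigma2 P + \sum_j pw P j * hgain P q i j.
  have Yp : 0 < Y.
    rewrite /Y; have : 0 <= \sum_j pw P j * hgain P q i j.
      by apply: sumr_ge0 => j _; exact: hg0.
    lra.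
  have HA : Dr P qr i - \sum_j Er P qr i j *
        (sqdist (q j) (spos P i) - sqdist (qr j) (spos P i)) <= ln Y / ln 2.
    have LB := @lin_bound R K (sigma2 P) (fun j => pw P j * omega P i j)
       (fun j => Halt P ^+ 2 + sqdist (q j) (spos P i)) (dr P qr i) s0 al0 dp d0p.
    cbv beta in LB.
    rewrite (eq_bigr _ (fun j _ => conv j)) -/Y in LB.
    set Y0 := sigma2 P + \sum_j pw P j * omega P i j / dr P qr i j in LB.
    have Y0p : 0 < Y0.
      rewrite /Y0; have : 0 <= \sum_j pw P j * omega P i j / dr P qr i j.
        by apply: sumr_ge0 => j _; exact: divr_ge0 (al0 j) (ltW (d0p j)).
      lra.
    set S := \sum_j _ in LB.
    have ES : \sum_j Er P qr i j * (sqdist (q j) (spos P i) - sqdist (qr j) (spos P i))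
              = S / ln 2.
      rewrite /S mulr_suml; apply: eq_bigr => j _.
      rewrite /Er /Dr /log2 -/Y0 powR_log // /dr.
      have := d0p j; rewrite /dr => h.
      by field; rewrite !gt_eqF.
    rewrite ES /Dr /log2 -/Y0 -mulrBl ler_pM2r ?invr_gt0 //.
  have HL : forall k, Lamt P b i k <=
      - (ln (sigma2 P + \sum_(j | j != k) pw P j * hgain P q i j) / ln 2).
    move=> k; rewrite /Lamt /log2 lerN2 ler_pM2r ?invr_gt0 //.
    have Zp : 0 <= \sum_(j | j != k) pw P j * hgain P q i j.
      by apply: sumr_ge0 => j _; exact: hg0.
    have Xp : 0 <= \sum_(j | j != k) pw P j * omega P i j / (Halt P ^+ 2 + b i j).
      by apply: sumr_ge0 => j _; exact: divr_ge0 (al0 j) (ltW (bp j)).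
    rewrite ler_ln ?posrE; [| lra | lra].
    rewrite lerD2l; apply: ler_sum => j _.
    rewrite -conv; apply: ler_wpM2l => //.
    rewrite lef_pV2 ?posrE // lerD2l.
    exact: le_trans (Hbq i j) (geo _ _).
  have HR : rate P q i = \sum_k assoc P i k *
      ((ln Y - ln (sigma2 P + \sum_(j | j != k) pw P j * hgain P q i j)) / ln 2).
    rewrite /rate; apply: eq_bigr => k _; congr (_ * _); rewrite /log2; congr (_ / _).
    have Zp : 0 <= \sum_(j | j != k) pw P j * hgain P q i j.
      by apply: sumr_ge0 => j _; exact: hg0.
    rewrite -ln_div ?posrE; [| lra | lra]; congr ln.
    have -> : Y = sigma2 P + (pw P k * hgain P q i k +
        \sum_(j | j != k) pw P j * hgain P q i j) by rewrite /Y (bigD1 k).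
    set Z := \sum_(j | j != k) _ in Zp *.
    by field; rewrite gt_eqF //; lra.
  apply: (le_trans (Hrate i)).
  rewrite HR -big_split /=; apply: ler_sum => k _.
  rewrite -mulrDr; apply: ler_wpM2l; first by case: (c01 i k) => ->; lra.
  have := HL k; rewrite mulrBl; lra.
have LB0 : 0 < Lvid P / Bw P by apply: divr_gt0.
have etap : forall i, 0 < eta i.
  move=> i; have [xi0 [e0 h]] := Hxe i.
  rewrite lt0r e0 andbT; apply/eqP => e00; rewrite e00 mulr0 in h; lra.
have rp : forall i, 0 < rate P q i by move=> i; exact: lt_le_trans (etap i) (Hr i).
have pen : forall i, delay_pen P q i = (Lvid P / (Bw P * rate P q i))%:E.
  by move=> i; rewrite /delay_pen ifF // gt_eqF.
have xig : forall i, Lvid P / (Bw P * rate P q i) <= xi i.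
  move=> i; have [xi0 [e0 h]] := Hxe i.
  rewrite invfM mulrA ler_pdivrMr //.
  apply: le_trans h _; apply: ler_wpM2l => //; exact: Hr.
rewrite /PsiT (eq_bigr _ (fun i _ => pen i)) sumEFin -EFinM -EFinB lee_fin /objC.
have S1 : \sum_i wgt P i * eta i <= \sum_i wgt P i * rate P q i.
  by apply: ler_sum => i _; apply: ler_wpM2l => //; exact: Hr.
have S2 : \sum_i Lvid P / (Bw P * rate P q i) <= \sum_i xi i.
  by apply: ler_sum => i _; exact: xig.
have S3 : Vrho P * \sum_i Lvid P / (Bw P * rate P q i) <= Vrho P * \sum_i xi i.
  by apply: ler_wpM2l.
lra.
Qed.
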